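(* Let $R$ be a generalized weakly Rickart $*$-ring. Then (1) for each $x\in R$ there exists $n\in\mathbb N$ such that $r(x^n)\cap (x^* )^nR=\{0\}$; and (2) the involution $*$ is weakly proper.
   Context: A $*$-ring is an associative ring $R$ with an involution $x\mapsto x^*$ (additive, $(xy)^*=y^*x^*$, $x^{**}=x$). A projection is an element $e$ with $e=e^*=e^2$. For $a\in R$, $r(a)=\{b\in R: ab=0\}$. A projection $e$ is a generalized right projection of $x$ if there exists $n\in\mathbb N$ with $x^ne=x^n$ and, for all $y\in R$, $x^ny=0$ implies $ey=0$. $R$ is a generalized weakly Rickart $*$-ring if every element has a generalized right projection. The involution is weakly proper if for every $x\in R$, $xx^*=0$ implies $x^n=0$ for some $n\in\mathbb N$. *)

(* Defs.v *)
(* A (not necessarily unital) associative *-ring is given by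
   an additive abelian group T (a zmodType), a multiplication [mul] and an
   involution [star], with the ring / involution axioms as hypotheses. *)
From HB Require Import structures.
From mathcomp Require Import all_boot all_algebra.
Set Implicit Arguments. Unset Strict Implicit. Unset Printing Implicit Defensive.
Import GRing.Theory.
Local Open Scope ring_scope.

Section StarRing.
Variables (T : zmodType) (mul : T -> T -> T) (star : T -> T).

Definition is_assoc_ring : Prop :=
  [/\ forall x y z, mul x (mul y z) = mul (mul x y) z,
      forall x y z, mul x (y + z) = mul x y + mul x z &
      forall x y z, mul (x + y) z = mul x z + mul y z].

Definition is_involution : Prop :=
  [/\ forall x y, star (x + y) = star x + star y,
      forall x y, star (mul x y) = mul (star y) (star x) &
      forall x, star (star x) = x].

(* positive powers: rpow x n = x^n for n >= 1 (only used with 0 < n) *)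
Definition rpow (x : T) (n : nat) : T := iter n.-1 (mul x) x.

Definition is_projection (e : T) : Prop := e = star e /\ mul e e = e.

Definition rann (a : T) : T -> Prop := fun b => mul a b = 0.

Definition gen_right_projection (x e : T) : Prop :=
  is_projection e /\
  exists n : nat, (0 < n)%N /\ mul (rpow x n) e = rpow x n /\
    forall y : T, mul (rpow x n) y = 0 -> mul e y = 0.

Definition gen_weakly_rickart : Prop :=
  forall x : T, exists e : T, gen_right_projection x e.

Definition weakly_proper : Prop :=
  forall x : T, mul x (star x) = 0 -> exists n : nat, (0 < n)%N /\ rpow x n = 0.

End StarRing.

(* Main.v *)
Require Import Defs.
From mathcomp Require Import all_boot all_algebra.
Local Open Scope ring_scope.
Import GRing.Theory.

Theorem mainTheorem10 (T : zmodType) (mul : T -> T -> T) (star : T -> T) :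
  is_assoc_ring mul -> is_involution mul star ->
  gen_weakly_rickart mul star ->
  (forall x : T, exists n : nat, (0 < n)%N /\
     forall z : T, rann mul (rpow mul x n) z ->
       (exists r : T, z = mul (rpow mul (star x) n) r) -> z = 0)
  /\ weakly_proper mul star.
Proof.
move=> [mA mDr mDl] [sD sM sK] GW.
have m0 : forall a, mul a 0 = 0.
  by move=> a; apply: (@addrI _ (mul a 0)); rewrite -mDr !addr0.
have m0l : forall a, mul 0 a = 0.
  by move=> a; apply: (@addrI _ (mul 0 a)); rewrite -mDl !addr0.
have s0 : star 0 = 0.
  by apply: (@addrI _ (star 0)); rewrite -sD !addr0.
have pr : forall x k, iter k.+1 (mul x) x = mul (iter k (mul x) x) x.
  move=> x; elim=> [|k IH] //=.
  have IH2 : mul x (iter k (mul x) x) = mul (iter k (mul x) x) x := IH.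
  by rewrite {1}IH2 mA.
have ps : forall x k, star (iter k (mul x) x) = iter k (mul (star x)) (star x).
  move=> x; elim=> [|k IH] //=.
  by rewrite sM IH; exact: (esym (pr (star x) k)).
have key : forall x e, gen_right_projection mul star x e ->
  exists n, (0 < n)%N /\ mul (rpow mul x n) e = rpow mul x n /\
    mul e (star (rpow mul x n)) = star (rpow mul x n) /\
    forall y, mul (rpow mul x n) y = 0 -> mul e y = 0.
  move=> x e; rewrite /gen_right_projection /is_projection => -[[es ee] [n [n0 [h1 h2]]]]; exists n; split=> //; split=> //.
  by split=> //; rewrite -{2}h1 sM -es.
split.
  move=> x; have [e /(key x e) [n [n0 [h1 [h2 h3]]]]] := GW x.
  exists n; split=> // z hz [r zr].
  have E : rpow mul (star x) n = star (rpow mul x n).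
    by case: n n0 {h1 h2 h3 hz zr} => // n _; rewrite /rpow /= ps.
  rewrite E in zr.
  move: (h3 z hz); rewrite zr mA h2 => <-.
  done.
move=> x hx; have [e /(key x e) [n [n0 [h1 [h2 h3]]]]] := GW x.
exists n; split=> //.
have hz : mul (rpow mul x n) (star (rpow mul x n)) = 0.
  case: n n0 {h1 h2 h3} => // -[|n] _; rewrite /rpow /=; first by [].
  have P : mul x (iter n (mul x) x) = mul (iter n (mul x) x) x := pr x n.
  by rewrite P sM -mA (mA x) hx m0l m0.
have := h3 _ hz; rewrite h2 => h.
by rewrite -(sK (rpow mul x n)) h s0.
Qed.
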